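(* Let $\mathcal{T}$ be a binary phylogenetic $X$-tree with $n=|X|\ge 4$ leaves. Then there exist $k\ge n/4$ pairs of leaves $\{a_1,b_1\},\dots,\{a_k,b_k\}$, pairwise disjoint as sets, such that (i) for every $i$, the distance $d_{\mathcal{T}}(a_i,b_i)$ is $2$ or $3$; and (ii) for $i\ne j$, the $a_i$–$b_i$ path and the $a_j$–$b_j$ path in $\mathcal{T}$ are edge-disjoint.
   Context: A phylogenetic $X$-tree is a finite tree whose leaves (degree-1 vertices) are bijectively labelled by the elements of $X$; it is binary if every vertex has degree 1 or 3. $d_{\mathcal{T}}(u,v)$ denotes the number of edges on the unique path between vertices $u,v$ of $\mathcal{T}$. *)

(* Defs.v *)
From mathcomp Require Import all_boot.
Set Implicit Arguments. Unset Strict Implicit. Unset Printing Implicit Defensive.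

Section Graphs.
Variables (V : finType) (e : rel V).

Definition simple_graph : Prop := symmetric e /\ irreflexive e.

Definition deg (x : V) : nat := #|[set y | e x y]|.

Definition connected_graph : Prop := forall u v : V, connect e u v.

Definition acyclic : Prop :=
  forall c : seq V, 3 <= size c -> uniq c -> ~~ cycle e c.

Definition is_tree : Prop := simple_graph /\ connected_graph /\ acyclic.

Definition is_leaf (x : V) : bool := deg x == 1.

Definition binary : Prop := forall x : V, deg x = 1 \/ deg x = 3.

Definition simple_path (u v : V) (p : seq V) : bool :=
  [&& path e u p, last u p == v & uniq (u :: p)].

Definition path_edges (u : V) (p : seq V) : seq {set V} :=
  [seq [set xy.1; xy.2] | xy <- zip (u :: p) p].
End Graphs.

Definition phylo_tree (X V : finType) (e : rel V) (lab : X -> V) : Prop :=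
  is_tree e /\ injective lab /\ (forall x : V, is_leaf e x <-> exists y, lab y = x).

Definition binary_phylo_tree (X V : finType) (e : rel V) (lab : X -> V) : Prop :=
  phylo_tree e lab /\ binary e.

(* Main.v *)
Require Import Defs.
From mathcomp Require Import all_boot zify.
Set Implicit Arguments. Unset Strict Implicit. Unset Printing Implicit Defensive.

Lemma sumbT (T : finType) (P : pred T) :
  \sum_y (P y : nat) = #|[set y | P y]|.
Proof.
rewrite -sum1_card [RHS]big_mkcond /=.
apply: eq_bigr => y _; rewrite inE; by case: (P y).
Qed.

Lemma sumb_card (T : finType) (A : {pred T}) (P : pred T) :
  \sum_(y in A) (P y : nat) = #|[set y in A | P y]|.
Proof.
rewrite -sum1_card big_mkcond /= [RHS]big_mkcond /=.
apply: eq_bigr => y _; rewrite inE; by case: (y \in A); case: (P y).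
Qed.

Lemma sum_setT (T : finType) (F : T -> nat) : \sum_(i in [set: T]) F i = \sum_i F i.
Proof. by apply: eq_bigl => i; rewrite inE. Qed.

Lemma flat_disj (T U : eqType) (f : T -> seq U) (s : seq T) (d : T) i j :
  uniq (flatten (map f s)) -> i < size s -> j < size s -> i != j ->
  forall z, z \in f (nth d s i) -> z \notin f (nth d s j).
Proof.
elim: s i j => [|t s IH] [|i] [|j] //=; rewrite cat_uniq => /and3P [u1 hn u2] Hi Hj ij z zi.
- apply/negP => zj; move/negP: hn; apply; apply/hasP; exists z => //.
  by apply/flatten_mapP; exists (nth d s j) => //; apply: mem_nth.
- apply/negP => zj; move/negP: hn; apply; apply/hasP; exists z => //.
  by apply/flatten_mapP; exists (nth d s i) => //; apply: mem_nth.
- exact: (IH i j u2 Hi Hj ij z zi).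
Qed.

Lemma flat_uniq_in (T U : eqType) (f : T -> seq U) (s : seq T) t :
  uniq (flatten (map f s)) -> t \in s -> uniq (f t).
Proof.
elim: s => [|t' s IH] //=; rewrite cat_uniq inE => /and3P [u1 _ u2] /orP [/eqP ->|ts] //.
exact: IH.
Qed.

Lemma uniq_flat (T U : eqType) (f : T -> seq U) (s : seq T) :
  uniq s -> (forall t, t \in s -> uniq (f t)) ->
  (forall t t', t \in s -> t' \in s -> t != t' -> forall z, z \in f t -> z \notin f t') ->
  uniq (flatten (map f s)).
Proof.
elim: s => [|t s IH] //= /andP [ts us] Hu Hd; rewrite cat_uniq Hu ?mem_head //=.
rewrite IH //; last first.
- by move=> a b ais bis; apply: Hd; rewrite inE ?ais ?bis orbT.
- by move=> a ais; apply: Hu; rewrite inE ais orbT.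
rewrite andbT; apply/hasP => [[z /flatten_mapP [t' t's zt'] zt]].
have tt' : t != t' by apply: contraNneq ts => ->.
have t's' : t' \in t :: s by rewrite inE t's orbT.
by move: (Hd t t' (mem_head _ _) t's' tt' z zt); rewrite zt'.
Qed.

Section Forest.
Variables (V : finType) (e : rel V).
Hypothesis esym : symmetric e.
Hypothesis eirr : irreflexive e.
Hypothesis eacyc : acyclic e.

Lemma other_nbr (W : {set V}) x z : 2 <= \sum_(y in W) e x y ->
  exists y, [&& y \in W, e x y & y != z].
Proof.
move=> H; case/boolP: [exists y, [&& y \in W, e x y & y != z]] => [/existsP //| /existsPn Hn].
exfalso.
have : \sum_(y in W) e x y <= \sum_(y in W) (y == z).
  apply: leq_sum => y yW; move: (Hn y); rewrite yW /=.
  by case: (e x y); case: (y == z).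
rewrite [X in _ <= X]sumb_card => H2.
have : #|[set y in W | y == z]| <= #|[set z]|.
  by apply: subset_leq_card; apply/subsetP => y; rewrite !inE => /andP[_ ->].
rewrite cards1; move: H H2; set s := \sum_(_ in _) _; lia.
Qed.

Lemma exists_low (W : {set V}) : W != set0 ->
  exists2 v, v \in W & \sum_(y in W) e v y <= 1.
Proof.
move=> /set0Pn [x0 x0W].
case/boolP: [exists v in W, \sum_(y in W) e v y <= 1] => [/exists_inP //| /exists_inPn Hn].
exfalso.
have H : forall v, v \in W -> 2 <= \sum_(y in W) e v y.
  by move=> v vW; move: (Hn v vW); rewrite -ltnNge.
have claim : forall m, exists x p,
   [/\ x \in W, path e x p, uniq (x :: p) & size p = m].
  elim=> [|m [x [p [xW pth un sz]]]].
    by exists x0, [::].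
  have [y /and3P [yW exy yne]] := other_nbr (head x p) (H x xW).
  case yin : (y \in x :: p).
    exfalso.
    move: yin; rewrite inE => /orP [/eqP yx|yp].
      by move: exy; rewrite yx eirr.
    case/splitPr: yp pth un yne => p1 p2 pth un yne.
    have p1n : p1 != [::] by case: p1 pth un yne => //=; rewrite eqxx.
    apply: (negP (eacyc (c := x :: rcons p1 y) _ _)).
    - by rewrite /= size_rcons; case: p1 p1n {pth un yne}.
    - move: un; rewrite -cat1s -[_ :: rcons _ _]cat1s -cats1 !cat_uniq /=.
      rewrite !has_cat /= !orbF !negb_or.
      move=> /and3P [/and3P [-> /andP [-> _] _] -> /and3P [/andP [-> _] _ _]] //.
    - rewrite /cycle /= !rcons_path last_rcons; move: pth; rewrite cat_path /= => /and3P [-> ey _].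
      by rewrite ey /= esym exy.
  exists y, (x :: p); split => //.
  - by rewrite /= esym exy pth.
  - by rewrite cons_uniq yin un.
  - by rewrite /= sz.
have [x [p [_ _ un sz]]] := claim #|V|.
move: (max_card (mem (x :: p))); rewrite (card_uniqP un) /= sz; change (#|V| < #|V| -> False); by rewrite ltnn.
Qed.


Lemma forest_bound (W : {set V}) : W != set0 ->
  \sum_(u in W) \sum_(y in W) (e u y : nat) + 2 <= 2 * #|W|.
Proof.
move Hn: #|W| => n; elim: n W Hn => [|n IH] W Hn W0.
  by move: W0; rewrite -card_gt0 Hn.
have [v vW vlow] := exists_low W0.
have dv : \sum_(y in W) (e v y : nat) = \sum_(y in W :\ v) (e v y : nat).
  by rewrite (big_setD1 v vW) /= eirr.
have HS : \sum_(u in W) \sum_(y in W) (e u y : nat) =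
   2 * \sum_(y in W :\ v) (e v y : nat) + \sum_(u in W :\ v) \sum_(y in W :\ v) (e u y : nat).
  rewrite (big_setD1 v vW (F := fun u => \sum_(y in W) (e u y : nat))) /= dv.
  rewrite (eq_bigr (F1 := fun u => \sum_(y in W) (e u y : nat)) (fun u => e u v + \sum_(y in W :\ v) (e u y : nat))); last first.
    by move=> u _; rewrite (big_setD1 v vW).
  rewrite big_split /=.
  rewrite (eq_bigr (F1 := fun u => (e u v : nat)) (fun u => (e v u : nat))); last by move=> u _; rewrite esym.
  lia.
have cW : #|W :\ v| = n by move: Hn; rewrite (cardsD1 v W) vW; case.
rewrite HS; move: vlow; rewrite dv.
case/boolP: (W :\ v == set0) => [/eqP E| nE].
  rewrite E !big_set0; lia.
have := IH _ cW nE; lia.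
Qed.

End Forest.
Section Tree.
Variables (X V : finType) (e : rel V) (lab : X -> V).
Hypothesis esym : symmetric e.
Hypothesis eirr : irreflexive e.
Hypothesis eacyc : acyclic e.
Hypothesis econn : connected_graph e.
Hypothesis labinj : injective lab.
Hypothesis leafiff : forall x : V, is_leaf e x <-> exists y, lab y = x.
Hypothesis bin : binary e.
Hypothesis n4 : 4 <= #|X|.

Local Notation leaf := (is_leaf e).

Lemma degE x : deg e x = \sum_y (e x y : nat).
Proof. by rewrite sumbT. Qed.

Lemma leaf_uniq z t t' : leaf z -> e z t -> e z t' -> t = t'.
Proof.
rewrite /is_leaf /deg => /cards1P [w Hw] H1 H2.
have : t \in [set y | e z y] by rewrite inE.
have : t' \in [set y | e z y] by rewrite inE.
by rewrite Hw !inE => /eqP -> /eqP ->.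
Qed.

Lemma leaf_lab x : leaf (lab x).
Proof. by apply/leafiff; exists x. Qed.

Definition par x := odflt (lab x) [pick y | e (lab x) y].

Lemma e_par x : e (lab x) (par x).
Proof.
rewrite /par; case: pickP => [y -> //|H].
have := leaf_lab x; rewrite /is_leaf /deg.
suff -> : [set y | e (lab x) y] = set0 by rewrite cards0.
by apply/setP => y; rewrite !inE H.
Qed.

Lemma par_uniq x y : e (lab x) y -> y = par x.
Proof. move=> H; exact: (leaf_uniq (leaf_lab x) H (e_par x)). Qed.

Lemma closure (K : {set V}) u v :
  (forall a b, a \in K -> e a b -> b \in K) -> u \in K -> v \in K.
Proof.
move=> cl uK; have /connectP [p pth ->] := econn u v.
elim: p u uK pth => [|w p IH] u uK //= /andP [ew pth].
exact: IH (cl _ _ uK ew) pth.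
Qed.

Lemma cardX_le (K : {set V}) : (forall v, v \in K) -> #|X| <= #|K|.
Proof.
move=> HK; rewrite -cardsT -(card_imset _ labinj).
by apply: subset_leq_card; apply/subsetP => v _; apply: HK.
Qed.

Lemma cardX_le' (K : {set V}) : (forall x, lab x \in K) -> #|X| <= #|K|.
Proof.
move=> HK; rewrite -cardsT -(card_imset _ labinj).
by apply: subset_leq_card; apply/subsetP => v /imsetP [x _ ->]; apply: HK.
Qed.

Lemma par_int x : ~~ leaf (par x).
Proof.
apply/negP => lp.
have cl : forall a b, a \in [set lab x; par x] -> e a b -> b \in [set lab x; par x].
  move=> a b; rewrite !inE => /orP [/eqP ->|/eqP ->] eab.
    by rewrite -(par_uniq eab) eqxx orbT.
  have epl : e (par x) (lab x) by rewrite esym; exact: e_par.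
  by rewrite (leaf_uniq lp eab epl) eqxx.
have := cardX_le (fun v => closure v cl (setU11 _ _)).
rewrite cards2; move: n4; case: (lab x != par x) => /=; lia.
Qed.


Definition ell w := \sum_x ((par x == w) : nat).

Lemma ell_pos w : 0 < ell w -> exists x, par x = w.
Proof.
move=> H; case/boolP: [exists x, par x == w] => [/existsP [x /eqP]|/existsPn Hn]; first by exists x.
by move: H; rewrite /ell big1 // => x _; rewrite (negbTE (Hn x)).
Qed.

Lemma ell_int w : 0 < ell w -> ~~ leaf w.
Proof. by move=> /ell_pos [x <-]; apply: par_int. Qed.

Lemma ell_leafnbr w : \sum_y ((e w y && leaf y) : nat) = ell w.
Proof.
rewrite sumbT /ell sumbT -[RHS](card_imset _ labinj); apply: eq_card => y.
rewrite !inE; apply/andP/imsetP.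
  move=> [ewy /leafiff [x lx]]; exists x; rewrite ?inE //.
  by apply/eqP; symmetry; apply: par_uniq; rewrite lx esym.
move=> [x]; rewrite inE => /eqP <- ->; split; last exact: leaf_lab.
by rewrite esym; exact: e_par.
Qed.

Lemma int_deg w : ~~ leaf w -> deg e w = 3.
Proof. by rewrite /is_leaf; case: (bin w) => ->. Qed.

Lemma leaf_deg w : leaf w -> deg e w = 1.
Proof. by rewrite /is_leaf => /eqP. Qed.

Lemma split_nbr w : \sum_y (e w y : nat) =
  \sum_y ((e w y && leaf y) : nat) + \sum_y ((e w y && ~~ leaf y) : nat).
Proof. rewrite -big_split /=; apply: eq_bigr => y _; by case: (e w y); case: (leaf y). Qed.

Lemma ni_eq w : ~~ leaf w -> \sum_y ((e w y && ~~ leaf y) : nat) + ell w = 3.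
Proof. move=> /int_deg; rewrite degE split_nbr ell_leafnbr; lia. Qed.

Lemma ell_le2 w : ell w <= 2.
Proof.
rewrite leqNgt; apply/negP => H3.
have wi : ~~ leaf w by apply: ell_int; lia.
have H0 := ni_eq wi.
have allleaf : forall y, e w y -> leaf y.
  move=> y ewy; apply/negPn/negP => ly.
  have : 0 < \sum_y ((e w y && ~~ leaf y) : nat).
    by rewrite (bigD1 y) //= ewy ly.
  lia.
set K := w |: [set y | e w y].
have cl : forall a b, a \in K -> e a b -> b \in K.
  move=> a b; rewrite !inE => /orP [/eqP ->|ewa] eab; first by rewrite eab orbT.
  by rewrite (leaf_uniq (allleaf _ ewa) eab (_ : e a w)) ?eqxx // esym.
have HK : forall x, lab x \in [set y | e w y].
  move=> x; have := closure (lab x) cl (setU11 _ _); rewrite !inE => /orP [/eqP E|//].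
  by move: wi; rewrite -E leaf_lab.
have := cardX_le' HK; rewrite -/(deg e w) (int_deg wi); lia.
Qed.

Definition isC w := ell w == 2.
Definition isS w := ell w == 1.
Definition isZ w := ~~ leaf w && (ell w == 0).

Lemma ellE w : ell w = 2 * isC w + isS w.
Proof. rewrite /isC /isS; have := ell_le2 w; case: (ell w) => [|[|[|]]] //. Qed.

Lemma leaf_ell w : leaf w -> ell w = 0.
Proof. by move=> lw; apply/eqP; rewrite -leqn0 leqNgt; apply/negP => /ell_int; rewrite lw. Qed.

Lemma intE w : (~~ leaf w : nat) = isC w + isS w + isZ w.
Proof.
rewrite /isC /isS /isZ; case: (boolP (leaf w)) => lw /=.
  by rewrite leaf_ell.
by have := ell_le2 w; case: (ell w) => [|[|[|]]].
Qed.

Lemma isC_int w : isC w -> ~~ leaf w.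
Proof. by rewrite /isC => /eqP H; apply: ell_int; rewrite H. Qed.
Lemma isS_int w : isS w -> ~~ leaf w.
Proof. by rewrite /isS => /eqP H; apply: ell_int; rewrite H. Qed.

Lemma nX_eq : #|X| = \sum_w ell w.
Proof.
rewrite /ell exchange_big /= -sum1_card; apply: eq_bigr => x _.
by rewrite sumbT (_ : [set w | par x == w] = [set par x]) ?cards1 //; apply/setP => w; rewrite !inE eq_sym.
Qed.

Lemma nL_eq : \sum_v (leaf v : nat) = #|X|.
Proof.
rewrite sumbT -cardsT -(card_imset _ labinj); apply: eq_card => v.
rewrite !inE; apply/idP/imsetP => [/leafiff [x <-]|[x _ ->]]; last exact: leaf_lab.
by exists x.
Qed.

Lemma int_bound : \sum_v (~~ leaf v : nat) + 2 <= #|X|.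
Proof.
have [x0 _] : exists x : X, x \in X by apply/card_gt0P; apply: leq_trans n4.
have := forest_bound esym eirr eacyc (W := [set: V]).
rewrite sum_setT (eq_bigr (fun u => deg e u)); last by move=> u _; rewrite sum_setT degE.
rewrite cardsT -sum1_card -nL_eq.
have -> : \sum_(i in V) 1 = \sum_v (leaf v + ~~ leaf v) by apply: eq_bigr => v _; case: (leaf v).
rewrite (eq_bigr (fun v => leaf v + 3 * (~~ leaf v))); last first.
  by move=> v _; case: (boolP (leaf v)) => lv; [rewrite leaf_deg | rewrite int_deg].
rewrite !big_split /= big1_eq.
have -> : [set: V] != set0 by apply/set0Pn; exists (lab x0).
move=> /(_ isT); lia.
Qed.

Definition nbrI u := \sum_y ((e u y && ~~ leaf y) : nat).

Lemma ni_S u : isS u -> nbrI u = 2.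
Proof. move=> Su; have := ni_eq (isS_int Su); move: Su; rewrite /isS => /eqP ->; rewrite /nbrI; lia. Qed.
Lemma ni_C u : isC u -> nbrI u = 1.
Proof. move=> Su; have := ni_eq (isC_int Su); move: Su; rewrite /isC => /eqP ->; rewrite /nbrI; lia. Qed.
Lemma ni_Z u : isZ u -> nbrI u = 3.
Proof. move=> Su; have := ni_eq (proj1 (andP Su)); move: Su; rewrite /isZ => /andP [_ /eqP ->]; rewrite /nbrI; lia. Qed.

Lemma nbr_split u y : ((e u y && ~~ leaf y) : nat) = e u y * isS y + e u y * (isC y + isZ y).
Proof. have := intE y; case: (e u y) => /= H; lia. Qed.

Definition AF := \sum_u \sum_y (isS u * e u y * isS y).
Definition cross := \sum_u \sum_y (isS u * e u y * (isC y + isZ y)).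

Lemma L1 : AF + cross = 2 * \sum_w isS w.
Proof.
rewrite /AF /cross -big_split /= big_distrr /=; apply: eq_bigr => u _; rewrite -big_split /=.
case: (boolP (isS u)) => Su /=; last by rewrite big1.
rewrite -(ni_S Su) /nbrI muln1; apply: eq_bigr => y _; rewrite nbr_split; lia.
Qed.

Lemma L2 : cross <= \sum_w isC w + 3 * \sum_w isZ w.
Proof.
apply: (@leq_trans (\sum_u \sum_y ((e u y && ~~ leaf u) * (isC y + isZ y)))).
  apply: leq_sum => u _; apply: leq_sum => y _.
  case: (boolP (isS u)) => Su //=; rewrite (isS_int Su) andbT mul1n //.
rewrite exchange_big /= big_distrr -big_split /=; apply: leq_sum => y _.
rewrite (eq_bigr (fun u => (e y u && ~~ leaf u) * (isC y + isZ y))); last first.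
  by move=> u _; rewrite esym.
rewrite -big_distrl /= -/(nbrI y).
case: (boolP (isC y)) => Cy.
  rewrite (ni_C Cy); move: Cy; rewrite /isC /isZ => /eqP ->; rewrite andbF; lia.
case: (boolP (isZ y)) => Zy.
  rewrite (ni_Z Zy) /=; lia.
by rewrite muln0.
Qed.

Definition matching (M : {set V * V}) : bool :=
  [forall q in M, [&& isS q.1, isS q.2 & e q.1 q.2]] &&
  [forall q in M, [forall q' in M, (q != q') ==>
     [&& q.1 != q'.1, q.1 != q'.2, q.2 != q'.1 & q.2 != q'.2]]].

Lemma matching0 : matching set0.
Proof. by apply/andP; split; apply/forall_inP => q; rewrite inE. Qed.

Definition Mx := [arg max_(M > set0 | matching M) #|M|].

Lemma Mx_spec : matching Mx /\ forall M, matching M -> #|M| <= #|Mx|.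
Proof. by rewrite /Mx; case: arg_maxnP => [|M HM Hmax]; [exact: matching0|]. Qed.

Definition VM := [set q.1 | q in Mx] :|: [set q.2 | q in Mx].

Lemma VM_card : #|VM| <= 2 * #|Mx|.
Proof.
apply: (leq_trans (leq_card_setU _ _)).
by rewrite mul2n -addnn leq_add // leq_imset_card.
Qed.

Lemma maximal u y : isS u -> isS y -> e u y -> (u \in VM) || (y \in VM).
Proof.
move=> Su Sy euy; apply/negPn/negP; rewrite negb_or => /andP [uV yV].
have [/andP [M1 M2] Mmax] := Mx_spec.
have uq : forall q, q \in Mx -> [&& u != q.1, u != q.2, y != q.1 & y != q.2].
  move=> q qM; move: uV yV; rewrite /VM !inE.
  case: (eqVneq u q.1) => [->|]; first by rewrite (imset_f (fun q : V * V => q.1) qM).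
  case: (eqVneq u q.2) => [->|]; first by rewrite (imset_f (fun q : V * V => q.2) qM) orbT.
  case: (eqVneq y q.1) => [->|]; first by rewrite (imset_f (fun q : V * V => q.1) qM).
  case: (eqVneq y q.2) => [->|]; first by rewrite (imset_f (fun q : V * V => q.2) qM) orbT.
  by [].
have nin : (u, y) \notin Mx by apply/negP => /uq /=; rewrite eqxx.
have : matching ((u, y) |: Mx).
  apply/andP; split.
    apply/forall_inP => q; rewrite !inE => /orP [/eqP -> /=|qM]; first by rewrite Su Sy euy.
    exact: (forall_inP M1).
  apply/forall_inP => q qM'; apply/forall_inP => q' qM'' ; apply/implyP => qq.
  move: qM' qM''; rewrite !inE => /orP [/eqP Eq|qM] /orP [/eqP Eq'|qM'].
  - by move: qq; rewrite Eq Eq' eqxx.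
  - by rewrite Eq /=; have := uq _ qM'; case/and4P => -> -> -> ->.
  - rewrite Eq' /=; have := uq _ qM; case/and4P => ? ? ? ?.
    by apply/and4P; split; rewrite eq_sym.
  - by have := (forall_inP (forall_inP M2 _ qM) _ qM'); rewrite qq.
move=> /Mmax; rewrite cardsU1 nin /=; lia.
Qed.

Lemma inner u : \sum_y (isS u * e u y * isS y) <= 2.
Proof.
case: (boolP (isS u)) => Su; last by rewrite big1.
rewrite -(ni_S Su); apply: leq_sum => y _; rewrite nbr_split; lia.
Qed.

Lemma AF_bound : AF <= 4 * #|VM|.
Proof.
apply: (@leq_trans (\sum_u \sum_y ((u \in VM) * (isS u * e u y * isS y)
                                   + (y \in VM) * (isS y * e y u * isS u)))).
  apply: leq_sum => u _; apply: leq_sum => y _.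
  rewrite (esym y u).
  case: (boolP (isS u)) => Su; case: (boolP (isS y)) => Sy; case: (boolP (e u y)) => euy //=; rewrite ?muln0 ?mul0n //.
  by have := maximal Su Sy euy; case: (u \in VM); case: (y \in VM).
have T_le : \sum_u \sum_y ((u \in VM) * (isS u * e u y * isS y)) <= 2 * #|VM|.
  have -> : #|VM| = \sum_u ((u \in VM) : nat).
    by rewrite sumbT; apply: eq_card => u; rewrite inE.
  rewrite big_distrr; apply: leq_sum => u _; rewrite -big_distrr /=.
  by case: (u \in VM) => /=; rewrite ?mul1n ?inner.
rewrite (eq_bigr (fun u => \sum_y ((u \in VM) * (isS u * e u y * isS y))
                   + \sum_y ((y \in VM) * (isS y * e y u * isS u)))); last first.
  by move=> u _; rewrite big_split.
rewrite big_split /= [X in _ + X <= _]exchange_big /=.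
lia.
Qed.

Lemma count_main : #|X| <= 4 * (\sum_w (isC w : nat) + #|Mx|).
Proof.
have h1 := nX_eq.
have h2 : \sum_w ell w = 2 * \sum_w (isC w : nat) + \sum_w (isS w : nat).
  by rewrite big_distrr -big_split; apply: eq_bigr => w _; rewrite ellE.
have h3 := int_bound.
have h4 : \sum_v (~~ leaf v : nat) = \sum_w (isC w : nat) + \sum_w (isS w : nat) + \sum_w (isZ w : nat).
  by rewrite -!big_split; apply: eq_bigr => w _; rewrite intE.
have h5 := L1. have h6 := L2. have h7 := AF_bound. have h8 := VM_card.
lia.
Qed.

Variable x0 : X.
Definition lw w := enum [set x | par x == w].
Definition l1 w := nth x0 (lw w) 0.
Definition l2 w := nth x0 (lw w) 1.

Lemma size_lw w : size (lw w) = ell w.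
Proof. by rewrite /lw -cardE /ell sumbT. Qed.

Lemma l1_par w : 0 < ell w -> par (l1 w) = w.
Proof.
move=> H; have : l1 w \in lw w by apply: mem_nth; rewrite size_lw.
by rewrite /lw mem_enum inE => /eqP.
Qed.

Lemma l2_par w : 1 < ell w -> par (l2 w) = w.
Proof.
move=> H; have : l2 w \in lw w by apply: mem_nth; rewrite size_lw.
by rewrite /lw mem_enum inE => /eqP.
Qed.

Lemma l12 w : 1 < ell w -> l1 w != l2 w.
Proof.
move=> H; rewrite /l1 /l2 nth_uniq ?size_lw //; [lia | exact: enum_uniq].
Qed.

Lemma lab_ne x w : ~~ leaf w -> lab x != w.
Proof. by move=> H; apply: contraNneq H => <-; exact: leaf_lab. Qed.

Lemma edge_leaf_eq x y : [set lab x; par x] = [set lab y; par y] -> x = y.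
Proof.
move=> E; have : lab x \in [set lab y; par y] by rewrite -E setU11.
rewrite !inE => /orP [/eqP /labinj //|/eqP H].
by move: (leaf_lab x); rewrite H (negbTE (par_int y)).
Qed.

Lemma edge_leaf_int x u v : ~~ leaf u -> ~~ leaf v -> [set lab x; par x] != [set u; v].
Proof.
move=> lu lv; apply/negP => /eqP E; have : lab x \in [set u; v] by rewrite -E setU11.
by rewrite !inE (negbTE (lab_ne x lu)) (negbTE (lab_ne x lv)).
Qed.

Definition fT (t : X * X * seq V) := [:: t.1.1; t.1.2].
Definition itC w : X * X * seq V := (l1 w, l2 w, [:: w; lab (l2 w)]).
Definition itM (q : V * V) : X * X * seq V := (l1 q.1, l1 q.2, [:: q.1; q.2; lab (l1 q.2)]).
Definition Cl := enum [set w | isC w].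
Definition Ml := enum Mx.
Definition sq := map itC Cl ++ map itM Ml.

Lemma size_sq : size sq = \sum_w (isC w : nat) + #|Mx|.
Proof. by rewrite /sq size_cat !size_map /Cl /Ml -!cardE sumbT. Qed.

Lemma Mx_in q : q \in Mx -> [&& isS q.1, isS q.2 & e q.1 q.2].
Proof. by have [/andP [M1 _] _] := Mx_spec; move/(forall_inP M1). Qed.

Lemma Mx_disj q q' : q \in Mx -> q' \in Mx -> q != q' ->
  [&& q.1 != q'.1, q.1 != q'.2, q.2 != q'.1 & q.2 != q'.2].
Proof. by have [/andP [_ M2] _] := Mx_spec => qM q'M; apply/implyP; apply: (forall_inP (forall_inP M2 _ qM)). Qed.

Lemma isS_ell w : isS w -> ell w = 1. Proof. by move/eqP. Qed.
Lemma isC_ell w : isC w -> ell w = 2. Proof. by move/eqP. Qed.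

Lemma memC z w : isC w -> z \in fT (itC w) -> par z = w.
Proof.
move=> Cw; rewrite !inE => /orP [/eqP ->|/eqP ->]; [apply: l1_par | apply: l2_par]; by rewrite isC_ell.
Qed.

Lemma memM z q : q \in Mx -> z \in fT (itM q) -> par z = q.1 \/ par z = q.2.
Proof.
move=> /Mx_in /and3P [S1 S2 _]; rewrite !inE => /orP [/eqP ->|/eqP ->].
  by left; apply: l1_par; rewrite isS_ell.
by right; apply: l1_par; rewrite isS_ell.
Qed.

Lemma Pd : uniq (flatten (map fT sq)).
Proof.
rewrite /sq map_cat flatten_cat cat_uniq -!map_comp; apply/and3P; split.
- apply: uniq_flat; first exact: enum_uniq.
    move=> w; rewrite mem_enum inE => Cw /=; rewrite andbT inE l12 //; by rewrite isC_ell.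
  move=> w w'; rewrite !mem_enum !inE => Cw Cw' ww' z zw; apply/negP => zw'.
  by move: ww'; rewrite -(memC Cw zw) -(memC Cw' zw') eqxx.
- apply/hasP => [[z /flatten_mapP [q qM zq] /flatten_mapP [w wC zw]]].
  move: wC qM; rewrite !mem_enum !inE => Cw qM.
  have /and3P [S1 S2 _] := Mx_in qM.
  move: (memC Cw zw) (memM qM zq) => -> [E|E]; move: Cw; rewrite /isC.
    by rewrite E (isS_ell S1).
  by rewrite E (isS_ell S2).
- apply: uniq_flat; first exact: enum_uniq.
    move=> q; rewrite mem_enum => qM /=; have /and3P [S1 S2 e12] := Mx_in qM.
    rewrite andbT inE; apply/negP => /eqP E; have := congr1 par E.
    by rewrite !l1_par ?isS_ell // => E12; move: e12; rewrite E12 eirr.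
  move=> q q'; rewrite !mem_enum => qM q'M qq z zq; apply/negP => zq'.
  have := Mx_disj qM q'M qq.
  by case: (memM qM zq) => <-; case: (memM q'M zq') => ->; rewrite eqxx ?andbF.
Qed.

Definition item_ok (t : X * X * seq V) :=
  (simple_path e (lab t.1.1) (lab t.1.2) t.2 /\ (size t.2 = 2 \/ size t.2 = 3)) /\
  (forall E, E \in path_edges (lab t.1.1) t.2 ->
     [\/ E = [set lab t.1.1; par t.1.1], E = [set lab t.1.2; par t.1.2] |
        exists u v, [/\ E = [set u; v], ~~ leaf u, ~~ leaf v, t.1.1 = l1 u & t.1.2 = l1 v]]).

Lemma itC_ok w : isC w -> item_ok (itC w).
Proof.
move=> Cw; have pa : par (l1 w) = w by apply: l1_par; rewrite isC_ell.
have pb : par (l2 w) = w by apply: l2_par; rewrite isC_ell.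
have wi := isC_int Cw.
have ab : l1 w != l2 w by apply: l12; rewrite isC_ell.
have ea : e (lab (l1 w)) w by have := e_par (l1 w); rewrite pa.
have eb : e w (lab (l2 w)) by have := e_par (l2 w); rewrite pb esym.
split; [split; [|by left] | ].
  rewrite /simple_path /= ea eb eqxx /= !inE !negb_or (lab_ne _ wi) (inj_eq labinj) ab /=.
  by rewrite eq_sym (lab_ne _ wi).
move=> E; rewrite /path_edges /= !inE => /orP [/eqP ->|/eqP ->].
  by apply: Or31; rewrite pa.
by apply: Or32; rewrite pb setUC.
Qed.

Lemma itM_ok q : q \in Mx -> item_ok (itM q).
Proof.
move=> /Mx_in /and3P [S1 S2 e12].
have pa : par (l1 q.1) = q.1 by apply: l1_par; rewrite isS_ell.
have pb : par (l1 q.2) = q.2 by apply: l1_par; rewrite isS_ell.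
have ui := isS_int S1; have vi := isS_int S2.
have uv : q.1 != q.2 by apply: contraTneq e12 => ->; rewrite eirr.
have ab : l1 q.1 != l1 q.2 by apply: contraNneq uv => E; rewrite -pa -pb E.
have ea : e (lab (l1 q.1)) q.1 by have := e_par (l1 q.1); rewrite pa.
have eb : e q.2 (lab (l1 q.2)) by have := e_par (l1 q.2); rewrite pb esym.
split; [split; [|by right] | ].
  rewrite /simple_path /= ea e12 eb eqxx /= !inE !negb_or (lab_ne _ ui) (lab_ne _ vi).
  rewrite (inj_eq labinj) ab uv /= eq_sym (lab_ne _ ui) eq_sym (lab_ne _ vi) //.
move=> E; rewrite /path_edges /= !inE => /orP [/eqP ->|/orP [/eqP ->|/eqP ->]].
- by apply: Or31; rewrite pa.
- by apply: Or33; exists q.1, q.2.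
- by apply: Or32; rewrite pb setUC.
Qed.

Lemma sq_ok t : t \in sq -> item_ok t.
Proof.
rewrite /sq mem_cat => /orP [/mapP [w wC ->]|/mapP [q qM ->]].
  by apply: itC_ok; move: wC; rewrite mem_enum inE.
by apply: itM_ok; move: qM; rewrite mem_enum.
Qed.

Lemma cls t E : item_ok t -> E \in path_edges (lab t.1.1) t.2 ->
  (exists2 x, x \in fT t & E = [set lab x; par x]) \/
  (exists u v, [/\ E = [set u; v], ~~ leaf u, ~~ leaf v, t.1.1 = l1 u & t.1.2 = l1 v]).
Proof.
move=> [_ H] /H [->|->|]; [left; exists t.1.1 | left; exists t.1.2 | by right] => //;
  by rewrite !inE eqxx ?orbT.
Qed.

Lemma disj_edges t t' E : (forall z, z \in fT t -> z \notin fT t') ->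
  item_ok t -> item_ok t' ->
  E \in path_edges (lab t.1.1) t.2 -> E \in path_edges (lab t'.1.1) t'.2 -> False.
Proof.
move=> D ok ok' Et Et'.
case: (cls ok Et) => [[x xt Ex]|[u [v [Euv ui vi a1 a2]]]];
case: (cls ok' Et') => [[y yt Ey]|[u' [v' [Euv' ui' vi' b1 b2]]]].
- have xy : x = y by apply: edge_leaf_eq; rewrite -Ex -Ey.
  by move: (D x xt); rewrite xy yt.
- by move: (edge_leaf_int x ui' vi'); rewrite -Ex -Euv' eqxx.
- by move: (edge_leaf_int y ui vi); rewrite -Ey -Euv eqxx.
- have : u \in [set u'; v'] by rewrite -Euv' Euv setU11.
  have t1 : t.1.1 \in fT t by rewrite !inE eqxx.
  move: (D _ t1); rewrite !inE a1 b1 b2 => /norP [H1 H2] /orP [/eqP E1|/eqP E1].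
    by rewrite E1 eqxx in H1.
  by rewrite E1 eqxx in H2.
Qed.

Lemma main_sec : exists (k : nat) (a b : 'I_k -> X) (P : 'I_k -> seq V),
    [/\ #|X| <= 4 * k,
        (forall i, a i != b i),
        (forall i j, i != j ->
           [/\ a i != a j, a i != b j, b i != a j & b i != b j]),
        (forall i, simple_path e (lab (a i)) (lab (b i)) (P i)
                   /\ (size (P i) = 2 \/ size (P i) = 3)) &
        (forall i j, i != j ->
           forall E, E \in path_edges (lab (a i)) (P i) ->
                     E \notin path_edges (lab (a j)) (P j))].
Proof.
pose d : X * X * seq V := (x0, x0, [::]).
exists (size sq), (fun i => (nth d sq i).1.1), (fun i => (nth d sq i).1.2), (fun i => (nth d sq i).2).
have mi : forall i : 'I_(size sq), nth d sq i \in sq by move=> i; apply: mem_nth.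
have D : forall i j : 'I_(size sq), i != j -> forall z, z \in fT (nth d sq i) -> z \notin fT (nth d sq j).
  move=> i j ij; apply: (flat_disj Pd (ltn_ord i) (ltn_ord j)).
  by apply: contra ij => /eqP H; apply/eqP/val_inj.
split.
- by rewrite size_sq; exact: count_main.
- move=> i; have := flat_uniq_in Pd (mi i); by rewrite /fT /= inE andbT.
- move=> i j ij.
  have h1 : (nth d sq i).1.1 \in fT (nth d sq i) by rewrite !inE eqxx.
  have h2 : (nth d sq i).1.2 \in fT (nth d sq i) by rewrite !inE eqxx orbT.
  move: (D i j ij _ h1) (D i j ij _ h2); rewrite !inE => /norP [-> ->] /norP [-> ->]; by split.
- by move=> i; have [H _] := sq_ok (mi i).
- move=> i j ij E Ei; apply/negP => Ej.
  exact: (disj_edges (D i j ij) (sq_ok (mi i)) (sq_ok (mi j)) Ei Ej).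
Qed.

End Tree.

Theorem lemma3p2 (X V : finType) (e : rel V) (lab : X -> V) :
  binary_phylo_tree e lab -> 4 <= #|X| ->
  exists (k : nat) (a b : 'I_k -> X) (P : 'I_k -> seq V),
    [/\ #|X| <= 4 * k,
        (forall i, a i != b i),
        (forall i j, i != j ->
           [/\ a i != a j, a i != b j, b i != a j & b i != b j]),
        (forall i, simple_path e (lab (a i)) (lab (b i)) (P i)
                   /\ (size (P i) = 2 \/ size (P i) = 3)) &
        (forall i j, i != j ->
           forall E, E \in path_edges (lab (a i)) (P i) ->
                     E \notin path_edges (lab (a j)) (P j))].
Proof.
move=> [[[[esym eirr] [econn eacyc]] [labinj leafiff]] bin] n4.
have [x0 _] : exists x : X, x \in X by apply/card_gt0P; apply: leq_trans n4.
exact: (main_sec esym eirr eacyc econn labinj leafiff bin n4 x0).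
Qed.
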